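(* Let $d\ge1$, let $\|\cdot\|$ be a norm on $\mathbb{R}^d$, let $\epsilon\ge0$, and consider either of the following two settings. (i) Least-squares regression: $k=1$, $(X,Y)$ is a random pair in $\mathbb{R}^d\times\mathbb{R}$, $\mathcal{F}$ is a class of functions $\mathbb{R}^d\to\mathbb{R}$, and the loss is $\ell(u,v)=(u-v)^2/2$. (ii) Multiclass classification: $k>1$, $\mathcal{F}$ is a class of functions from $\mathbb{R}^d$ to the unit simplex $\triangle^{k-1}=\{u\in\mathbb{R}^k: u_j\ge0,\ \sum_j u_j=1\}$, $(X,Y)$ is a random pair where $X\in\mathbb{R}^d$ and $Y$ takes values in the set of canonical basis vectors of $\mathbb{R}^k$, and the loss is the Kullback--Leibler divergence $\ell(u,v)=\sum_{j=1}^k v_j\log\frac{v_j}{u_j}$ (with the convention $0\log(0/u)=0$). In either setting, define for $f\in\mathcal{F}$ the mean local smoothness factor $$L_\epsilon(f)=\mathbb{E}\sup_{\Delta:\|\Delta\|\le\epsilon}\|f(X+\Delta)-f(X)\|_1^2.$$ Then for every $f\in\mathcal{F}$, $$R(f)+R_\epsilon(f)\ge\frac16\max\left\{L_\epsilon(f),\ \mathbb{E}\|Y-Y'\|_1^2\right\},$$ where, conditioned on $X$, $Y'$ is independent of $Y$ and has the same conditional distribution as $Y$ given $X$.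
   Context: $R(f)=\mathbb{E}\,\ell(f(X),Y)$ is the standard risk and $R_\epsilon(f)=\mathbb{E}\left(\sup_{\Delta\in\mathbb{R}^d:\|\Delta\|\le\epsilon}\ell(f(X+\Delta),Y)\right)$ is the adversarial risk, with $\ell$ the loss of the respective setting. $\|\cdot\|_1$ is the $\ell_1$ norm on $\mathbb{R}^k$ (for $k=1$, the absolute value). All expectations are assumed well defined (possibly $+\infty$). *)

(* Defs.v *)
From HB Require Import structures.
From mathcomp Require Import all_boot all_order all_algebra.
From mathcomp Require Import all_classical all_reals all_analysis.
From mathcomp Require Import measurable_realfun.

Set Implicit Arguments.
Unset Strict Implicit.
Unset Printing Implicit Defensive.

Import Order.TTheory GRing.Theory Num.Theory.
Local Open Scope ring_scope.
Local Open Scope classical_set_scope.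

Definition is_norm (R : realType) (d : nat) (N : 'rV[R]_d -> R) : Prop :=
  [/\ forall x, N x = 0 -> x = 0,
      forall (a : R) x, N (a *: x) = `|a| * N x &
      forall x y, N (x + y) <= N x + N y].

Definition l1norm (R : realType) (k : nat) (v : 'rV[R]_k) : R :=
  \sum_(j < k) `|v ord0 j|.

Definition in_simplex (R : realType) (k : nat) (u : 'rV[R]_k) : Prop :=
  (forall j, 0 <= u ord0 j) /\ \sum_(j < k) u ord0 j = 1.

Definition basis_vec (R : realType) (k : nat) (j : 'I_k) : 'rV[R]_k :=
  delta_mx ord0 j.

Definition adv_sup (R : realType) (d : nat) (N : 'rV[R]_d -> R) (eps : R)
  (g : 'rV[R]_d -> \bar R) : \bar R :=
  ereal_sup [set g D | D in [set D | N D <= eps]].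

Definition sq_loss (R : realType) (u v : R) : \bar R := ((u - v) ^+ 2 / 2)%:E.

(* one term v_j log(v_j / u_j) of the KL divergence, with 0 log(0/u) = 0
   and v log(v/0) = +oo for v > 0 *)
Definition kl_term (R : realType) (uj vj : R) : \bar R :=
  if vj == 0 then 0%E else if uj == 0 then +oo%E else (vj * ln (vj / uj))%:E.

Definition kl_loss (R : realType) (k : nat) (u v : 'rV[R]_k) : \bar R :=
  (\sum_(j < k) kl_term (u ord0 j) (v ord0 j))%E.

Local Open Scope ereal_scope.

(* ---------- Setting (i): least-squares regression ----------
   (X, Y): X : Omega -> R^d on the probability space (Omega, P), and the
   conditional law of Y given X = x is kappa x (a probability on R). *)

Definition risk_reg (R : realType) (dO : measure_display) (O : measurableType dO)
  (P : probability O R) (d : nat) (X : O -> 'rV[R]_d) (kappa : 'rV[R]_d -> probability R R)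
  (f : 'rV[R]_d -> R) : \bar R :=
  \int[P]_w \int[kappa (X w)]_y sq_loss (f (X w)) y.

Definition adv_risk_reg (R : realType) (dO : measure_display) (O : measurableType dO)
  (P : probability O R) (d : nat) (X : O -> 'rV[R]_d) (kappa : 'rV[R]_d -> probability R R)
  (N : 'rV[R]_d -> R) (eps : R) (f : 'rV[R]_d -> R) : \bar R :=
  \int[P]_w \int[kappa (X w)]_y adv_sup N eps (fun D => sq_loss (f (X w + D)%R) y).

Definition smooth_reg (R : realType) (dO : measure_display) (O : measurableType dO)
  (P : probability O R) (d : nat) (X : O -> 'rV[R]_d)
  (N : 'rV[R]_d -> R) (eps : R) (f : 'rV[R]_d -> R) : \bar R :=
  \int[P]_w adv_sup N eps (fun D => (`|(f (X w + D)%R - f (X w))%R| ^+ 2)%:E).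

(* E |Y - Y'|^2, Y' a conditionally independent copy of Y given X *)
Definition ydisp_reg (R : realType) (dO : measure_display) (O : measurableType dO)
  (P : probability O R) (d : nat) (X : O -> 'rV[R]_d) (kappa : 'rV[R]_d -> probability R R)
  : \bar R :=
  \int[P]_w \int[kappa (X w)]_y \int[kappa (X w)]_y' (`|y - y'| ^+ 2)%:E.

(* ---------- Setting (ii): multiclass classification ----------
   Y takes values in {e_1,...,e_k}; its conditional law given X = x is the
   probability vector p x: P(Y = e_j | X = x) = p x 0 j. *)

Definition risk_cls (R : realType) (dO : measure_display) (O : measurableType dO)
  (P : probability O R) (d k : nat) (X : O -> 'rV[R]_d) (p : 'rV[R]_d -> 'rV[R]_k)
  (f : 'rV[R]_d -> 'rV[R]_k) : \bar R :=
  \int[P]_w \sum_(j < k) (p (X w) ord0 j)%:E * kl_loss (f (X w)) (basis_vec R j).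

Definition adv_risk_cls (R : realType) (dO : measure_display) (O : measurableType dO)
  (P : probability O R) (d k : nat) (X : O -> 'rV[R]_d) (p : 'rV[R]_d -> 'rV[R]_k)
  (N : 'rV[R]_d -> R) (eps : R) (f : 'rV[R]_d -> 'rV[R]_k) : \bar R :=
  \int[P]_w \sum_(j < k) (p (X w) ord0 j)%:E *
     adv_sup N eps (fun D => kl_loss (f (X w + D)%R) (basis_vec R j)).

Definition smooth_cls (R : realType) (dO : measure_display) (O : measurableType dO)
  (P : probability O R) (d k : nat) (X : O -> 'rV[R]_d)
  (N : 'rV[R]_d -> R) (eps : R) (f : 'rV[R]_d -> 'rV[R]_k) : \bar R :=
  \int[P]_w adv_sup N eps (fun D => (l1norm ((f (X w + D)%R - f (X w))%R) ^+ 2)%:E).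

Definition ydisp_cls (R : realType) (dO : measure_display) (O : measurableType dO)
  (P : probability O R) (d k : nat) (X : O -> 'rV[R]_d) (p : 'rV[R]_d -> 'rV[R]_k)
  : \bar R :=
  \int[P]_w \sum_(i < k) \sum_(j < k)
     (p (X w) ord0 i * p (X w) ord0 j *
      l1norm (basis_vec R i - basis_vec R j)%R ^+ 2)%:E.

(* Main.v *)
Set Warnings "-all".
Require Import Defs.
From HB Require Import structures.
From mathcomp Require Import all_boot all_order all_algebra.
From mathcomp Require Import all_classical all_reals all_analysis.
From mathcomp Require Import measurable_realfun.
From mathcomp Require Import ring lra.
Set Implicit Arguments. Unset Strict Implicit.
Import Order.TTheory GRing.Theory Num.Theory.
Local Open Scope ring_scope.
Local Open Scope classical_set_scope.

Lemma ln_le_sub1 (R : realType) (t : R) : 0 < t -> ln t <= t - 1.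
Proof.
move=> t0; have := expR_ge1Dx (ln t); rewrite lnK ?posrE //; lra.
Qed.

Lemma ln_bound (R : realType) (t : R) : 0 < t -> t <= 1 ->
  4 * (1 - t) ^+ 2 <= 3 * - ln t.
Proof.
move=> t0 t1; set s := Num.sqrt t.
have s0 : 0 < s by rewrite sqrtr_gt0.
have s2 : s ^+ 2 = t by rewrite sqr_sqrtr // ltW.
have s1 : s <= 1 by rewrite -sqrtr1 ler_sqrt.
have hl : ln t = 2 * ln s by rewrite -s2 lnXn // mulr2n; lra.
have hs := @ln_le_sub1 R s s0.
rewrite hl -s2.
have h1 : s ^+ 3 + s ^+ 2 - s + 1/2 >= 0.
  have : 0 <= (s - 1/2) ^+ 2 by apply: sqr_ge0.
  have : 0 <= s ^+ 3 by rewrite exprn_ge0 // ltW.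
  rewrite !exprS expr0 => *; nra.
have : 0 <= (1 - s) * (s ^+ 3 + s ^+ 2 - s + 1/2).
  by apply: mulr_ge0 => //; lra.
rewrite !exprS expr0 in h1 * => h2; nra.
Qed.

Local Open Scope ereal_scope.

Lemma kl_basis (R : realType) k (u : 'rV[R]_k) (j : 'I_k) :
  kl_loss u (basis_vec R j) = kl_term (u ord0 j) 1.
Proof.
rewrite /kl_loss (bigD1 j) //= big1 ?adde0.
  by rewrite /basis_vec mxE !eqxx.
move=> i ij; rewrite /basis_vec mxE eqxx /= (negbTE ij) /kl_term /=.
by rewrite eqxx.
Qed.

Lemma klt_bound (R : realType) (u : R) : (0 <= u)%R -> (u <= 1)%R ->
  (4 * (1 - u) ^+ 2)%:E <= 3%:E * kl_term u 1.
Proof.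
move=> u0 u1; rewrite /kl_term oner_eq0.
case: eqP => [->|/eqP un0]; first by rewrite gt0_muley ?leey ?lte_fin.
have up : (0 < u)%R by rewrite lt_neqAle eq_sym un0.
rewrite -EFinM lee_fin mul1r div1r lnV ?posrE //.
exact: ln_bound.
Qed.

Lemma klt_ge0 (R : realType) (u : R) : (0 <= u)%R -> (u <= 1)%R ->
  0 <= kl_term u 1.
Proof.
move=> u0 u1; rewrite /kl_term oner_eq0.
have [_|un0] := eqVneq u 0%R; first by rewrite leey.
have up : (0 < u)%R by rewrite lt_neqAle eq_sym un0.
rewrite lee_fin mul1r div1r lnV ?posrE // oppr_ge0; exact: ln_le0.
Qed.

Lemma l1normD (R : realType) k (x y : 'rV[R]_k) :
  (l1norm (x + y) <= l1norm x + l1norm y)%R.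
Proof.
rewrite /l1norm -big_split /=; apply: ler_sum => i _; rewrite mxE; exact: ler_normD.
Qed.

Lemma l1normN (R : realType) k (x : 'rV[R]_k) : l1norm (- x) = l1norm x.
Proof. by apply: eq_bigr => i _; rewrite mxE normrN. Qed.

Lemma simplex_le1 (R : realType) k (u : 'rV[R]_k) j : in_simplex u ->
  (0 <= u ord0 j)%R /\ (u ord0 j <= 1)%R.
Proof.
move=> [u0 u1]; split => //; rewrite -u1 (bigD1 j) //= lerDl.
by apply: sumr_ge0 => i _.
Qed.

Lemma l1_basis (R : realType) k (u : 'rV[R]_k) j : in_simplex u ->
  l1norm (basis_vec R j - u) = (2 * (1 - u ord0 j))%R.
Proof.
move=> hu; have [u0 u1] := hu; have [_ uj1] := simplex_le1 j hu.
rewrite /l1norm (bigD1 j) //=.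
rewrite /basis_vec !mxE !eqxx /=.
have -> : (\sum_(i < k | i != j) `|(basis_vec R j - u) ord0 i| =
          \sum_(i < k | i != j) u ord0 i)%R.
  apply: eq_bigr => i ij; rewrite /basis_vec !mxE eqxx (negbTE ij) /=.
  by rewrite sub0r normrN ger0_norm.
move: u1; rewrite (bigD1 j) //= => u1.
rewrite ger0_norm; last by rewrite subr_ge0.
lra.
Qed.

Lemma l1_diff_bound (R : realType) k (a b : 'rV[R]_k) j :
  in_simplex a -> in_simplex b ->
  (l1norm (b - a) <= 2 * (1 - b ord0 j) + 2 * (1 - a ord0 j))%R.
Proof.
move=> ha hb; rewrite -(l1_basis j ha) -(l1_basis j hb).
have -> : (b - a = - (basis_vec R j - b) + (basis_vec R j - a))%R.
  by rewrite opprB addrA subrK.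
by rewrite -(l1normN (basis_vec R j - b)); apply: l1normD.
Qed.

Lemma norm0 (R : realType) d (N : 'rV[R]_d -> R) : is_norm N -> N 0%R = 0%R.
Proof. by case=> _ hZ _; rewrite -(scale0r 0%R) hZ normr0 mul0r. Qed.

Lemma adv_sup_ub (R : realType) d (N : 'rV[R]_d -> R) eps g D :
  (N D <= eps)%R -> g D <= adv_sup N eps g.
Proof. by move=> hD; apply: ereal_sup_ubound; exists D. Qed.

Lemma adv_sup_le (R : realType) d (N : 'rV[R]_d -> R) eps g M :
  (forall D, (N D <= eps)%R -> g D <= M) -> adv_sup N eps g <= M.
Proof. by move=> h; apply: ge_ereal_sup => _ [D hD <-]; exact: h. Qed.

Lemma adv_sup0 (R : realType) d (N : 'rV[R]_d -> R) eps g :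
  is_norm N -> (0 <= eps)%R -> g 0%R <= adv_sup N eps g.
Proof. by move=> hN he; apply: adv_sup_ub; rewrite norm0. Qed.

Lemma nm_le_integral dT (T : measurableType dT) (R : realType)
  (mu : {measure set T -> \bar R}) (f g : T -> \bar R) :
  (forall x, 0 <= f x) -> (forall x, f x <= g x) ->
  \int[mu]_x f x <= \int[mu]_x g x.
Proof.
move=> f0 fg; have g0 x : 0 <= g x by apply: le_trans (f0 x) (fg x).
rewrite !ge0_integralTE //; apply: le_ereal_sup => _ [h hf <-].
by exists h => // x; apply: le_trans (hf x) (fg x).
Qed.

Lemma msq (R : realType) (c : R) : measurable_fun setT (fun y : R => sq_loss c y).
Proof.
apply/measurable_EFinP; apply: measurable_funM => //.
apply: measurable_funX; apply: measurable_funB => //.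
Qed.

Lemma sq0 (R : realType) (c y : R) : 0 <= sq_loss c y.
Proof. by rewrite lee_fin divr_ge0 // sqr_ge0. Qed.

Lemma reg_part (R : realType) (d : nat) (N : 'rV[R]_d -> R) (eps : R)
     (dO : measure_display) (O : measurableType dO) (P : probability O R)
     (X : O -> 'rV[R]_d) (kappa : 'rV[R]_d -> probability R R)
     (f : 'rV[R]_d -> R) :
     (1 <= d)%N -> is_norm N -> (0 <= eps)%R ->
     measurable_fun setT (fun w => (\int[kappa (X w)]_y sq_loss (f (X w)) y)%E) ->
     (forall w, measurable_fun setT
        (fun y : R => adv_sup N eps (fun D => sq_loss (f (X w + D)%R) y))) ->
     measurable_fun setT (fun w => (\int[kappa (X w)]_y
        adv_sup N eps (fun D => sq_loss (f (X w + D)%R) y))%E) ->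
     measurable_fun setT (fun w =>
        adv_sup N eps (fun D => (`|(f (X w + D)%R - f (X w))%R| ^+ 2)%:E)) ->
     measurable_fun setT (fun w =>
        (\int[kappa (X w)]_y \int[kappa (X w)]_y' (`|(y - y')%R| ^+ 2)%:E)%E) ->
     (risk_reg P X kappa f + adv_risk_reg P X kappa N eps f >=
        (6^-1)%:E * maxe (smooth_reg P X N eps f) (ydisp_reg P X kappa))%E.
Proof.
move=> _ hN he mI1 mS mI2 mL mYd.
set S := fun w y => adv_sup N eps (fun D => sq_loss (f (X w + D)%R) y).
set I1 := fun w => (\int[kappa (X w)]_y sq_loss (f (X w)) y)%E.
set I2 := fun w => (\int[kappa (X w)]_y S w y)%E.
have Sa w y : sq_loss (f (X w)) y <= S w y.
  by rewrite /S; have := adv_sup0 (fun D => sq_loss (f (X w + D)%R) y) hN he; rewrite addr0.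
have S0 w y : 0 <= S w y by apply: le_trans (Sa w y); exact: sq0.
have I10 w : 0 <= I1 w by apply: integral_ge0 => y _; exact: sq0.
have I20 w : 0 <= I2 w by apply: integral_ge0 => y _; exact: S0.
have I12 w : I1 w <= I2 w.
  apply: ge0_le_integral => //. all: try exact: msq. all: try exact: mS. all: try by move=> y _; exact: sq0. all: try by move=> y _; exact: Sa.
have hI w : I1 w + I2 w = \int[kappa (X w)]_y (sq_loss (f (X w)) y + S w y).
  rewrite ge0_integralD //. all: try exact: msq. all: try exact: mS. all: try by move=> y _; exact: sq0. all: try by move=> y _; exact: S0.
have icst w (r : R) : \int[kappa (X w)]_y r%:E = r%:E.
  have h := probability_setT (kappa (X w)).
  by rewrite integral_cst // -[in RHS](mule1 r%:E) -h.
have hL w : adv_sup N eps (fun D => (`|(f (X w + D)%R - f (X w))%R| ^+ 2)%:E)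
            <= 6%:E * (I1 w + I2 w).
  have hZ : \int[kappa (X w)]_y (6%:E * (sq_loss (f (X w)) y + S w y)) =
     6%:E * \int[kappa (X w)]_y (sq_loss (f (X w)) y + S w y).
    rewrite ge0_integralZl_EFin //.
    - by move=> y _; rewrite adde_ge0 //; exact: sq0.
    - exact: (emeasurable_funD (msq _) (mS w)).
  apply: adv_sup_le => D hD; rewrite -[X in X <= _](icst w) hI -hZ.
  apply: (@nm_le_integral _ _ _ (kappa (X w))) => y; first by rewrite lee_fin sqr_ge0.
  apply: (@le_trans _ _ (6%:E * (sq_loss (f (X w)) y + sq_loss (f (X w + D)%R) y))).
    rewrite /sq_loss -EFinD -EFinM lee_fin real_normK ?num_real //.
    set a := f (X w); set b := f (X w + D)%R.
    have h1 : (0 <= (a + b - 2 * y) ^+ 2)%R by apply: sqr_ge0.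
    have h2 : (0 <= (a - y) ^+ 2)%R by apply: sqr_ge0.
    have h3 : (0 <= (b - y) ^+ 2)%R by apply: sqr_ge0.
    rewrite !expr2 in h1 h2 h3 *; nra.
  by apply: lee_wpmul2l => //; apply: leeD2l; exact: adv_sup_ub.
have hY w : (\int[kappa (X w)]_y \int[kappa (X w)]_y' (`|(y - y')%R| ^+ 2)%:E)%E
            <= 6%:E * (I1 w + I2 w).
  have icstE (r : \bar R) : \int[kappa (X w)]_y r = r.
    have h := probability_setT (kappa (X w)).
    by rewrite integral_cst // -[in RHS](mule1 r) -h.
  have inner y : \int[kappa (X w)]_y' (`|(y - y')%R| ^+ 2)%:E
       <= 4%:E * (sq_loss (f (X w)) y + I1 w).
    have e : 4%:E * (sq_loss (f (X w)) y + I1 w) =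
       \int[kappa (X w)]_y' (4%:E * (sq_loss (f (X w)) y + sq_loss (f (X w)) y')).
      rewrite ge0_integralZl_EFin //.
      - rewrite ge0_integralD //.
        + by rewrite icstE.
        + by move=> y' _; exact: sq0.
        + by move=> y' _; exact: sq0.
        + exact: msq.
      - by move=> y' _; rewrite adde_ge0 //; exact: sq0.
      - by apply: emeasurable_funD; [exact: measurable_cst|exact: msq].
    rewrite e; apply: (@nm_le_integral _ _ _ (kappa (X w))) => y'.
      by rewrite lee_fin sqr_ge0.
    rewrite /sq_loss -EFinD -EFinM lee_fin real_normK ?num_real //.
    set a := f (X w).
    have h1 : (0 <= (2 * a - y - y') ^+ 2)%R by apply: sqr_ge0.
    rewrite !expr2 in h1 *; nra.
  apply: (@le_trans _ _ (\int[kappa (X w)]_y (4%:E * (sq_loss (f (X w)) y + I1 w)))).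
    apply: (@nm_le_integral _ _ _ (kappa (X w))) => y; last exact: inner.
    by apply: integral_ge0 => y' _; rewrite lee_fin sqr_ge0.
  rewrite ge0_integralZl_EFin //; first last.
  - by apply: emeasurable_funD; [exact: msq|exact: measurable_cst].
  - by move=> y _; rewrite adde_ge0 //; exact: sq0.
  rewrite ge0_integralD //; last first.
  all: try exact: msq.
  all: try by move=> y _; exact: sq0.
  all: try by move=> y _.
  rewrite icstE.
  apply: (@le_trans _ _ (4%:E * (I1 w + I2 w))).
    by apply: lee_wpmul2l => //; apply: leeD2l.
  by apply: lee_wpmul2r; [exact: adde_ge0|rewrite lee_fin; lra].
have -> : risk_reg P X kappa f + adv_risk_reg P X kappa N eps f =
          \int[P]_w (I1 w + I2 w).
  by rewrite ge0_integralD.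
have hC : \int[P]_w (6%:E * (I1 w + I2 w)) = 6%:E * \int[P]_w (I1 w + I2 w).
  by rewrite ge0_integralZl_EFin // => [w _|]; [exact: adde_ge0|exact: emeasurable_funD].
have L0 w : 0 <= adv_sup N eps (fun D => (`|(f (X w + D)%R - f (X w))%R| ^+ 2)%:E).
  by apply: le_trans (adv_sup0 _ hN he); rewrite lee_fin sqr_ge0.
have Y0 w : 0 <= (\int[kappa (X w)]_y \int[kappa (X w)]_y' (`|(y - y')%R| ^+ 2)%:E)%E.
  by apply: integral_ge0 => y _; apply: integral_ge0 => y' _; rewrite lee_fin sqr_ge0.
have hmax : maxe (smooth_reg P X N eps f) (ydisp_reg P X kappa) <=
            6%:E * \int[P]_w (I1 w + I2 w).
  rewrite ge_max -hC; apply/andP; split; apply: nm_le_integral => //.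
have e : \int[P]_w (I1 w + I2 w) =
   (6^-1)%:E * (6%:E * \int[P]_w (I1 w + I2 w)).
  by rewrite muleA -EFinM mulVf // mul1e.
by rewrite e; apply: lee_wpmul2l => //; rewrite lee_fin invr_ge0.
Qed.

Lemma psum_ge0 (R : realType) k (p : 'rV[R]_k) (F : 'I_k -> \bar R) :
  in_simplex p -> (forall j, 0 <= F j) ->
  0 <= \sum_(j < k) (p ord0 j)%:E * F j.
Proof.
move=> [p0 _] F0; apply: sume_ge0 => j _; apply: mule_ge0 => //.
by rewrite lee_fin.
Qed.

Lemma psum_cst (R : realType) k (p : 'rV[R]_k) (c : \bar R) :
  in_simplex p -> 0 <= c -> c = \sum_(j < k) (p ord0 j)%:E * c.
Proof.
move=> [p0 p1] c0; rewrite -ge0_sume_distrl; last by move=> j _; rewrite lee_fin.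
by rewrite sumEFin p1 mul1e.
Qed.

Lemma psum_6 (R : realType) k (p : 'rV[R]_k) (F : 'I_k -> \bar R) :
  in_simplex p -> (forall j, 0 <= F j) ->
  \sum_(j < k) (p ord0 j)%:E * (6%:E * F j) =
  6%:E * \sum_(j < k) (p ord0 j)%:E * F j.
Proof.
move=> [p0 _] F0; rewrite ge0_sume_distrr; last first.
  by move=> j _; apply: mule_ge0 => //; rewrite lee_fin.
by apply: eq_bigr => j _; rewrite muleCA.
Qed.

Lemma e6 (R : realType) (x : \bar R) : 2%:E * (3%:E * x) = 6%:E * x.
Proof. by rewrite muleA -EFinM (_ : (2 * 3 = 6 :> R)%R) //; lra. Qed.

Lemma e12 (R : realType) (x : \bar R) : 0 <= x -> 4%:E * (3%:E * x) = 6%:E * (x + x).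
Proof.
move=> x0; rewrite muleA -EFinM ge0_muleDr // -ge0_muleDl ?lee_fin //.
by rewrite -EFinD (_ : (4 * 3 = 6 + 6 :> R)%R) //; lra.
Qed.

Lemma cls_L (R : realType) k (a b p : 'rV[R]_k) (Sj : 'I_k -> \bar R) :
  in_simplex a -> in_simplex b -> in_simplex p ->
  (forall j, kl_loss b (basis_vec R j) <= Sj j) ->
  ((l1norm (b - a)) ^+ 2)%:E <=
  6%:E * \sum_(j < k) (p ord0 j)%:E * (kl_loss a (basis_vec R j) + Sj j).
Proof.
move=> ha hb hp hS.
have Ka0 j : 0 <= kl_loss a (basis_vec R j).
  by rewrite kl_basis; have [? ?] := simplex_le1 j ha; exact: klt_ge0.
have Kb0 j : 0 <= kl_loss b (basis_vec R j).
  by rewrite kl_basis; have [? ?] := simplex_le1 j hb; exact: klt_ge0.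
have S0 j : 0 <= Sj j by apply: le_trans (hS j).
rewrite -(psum_6 hp); last by move=> j; exact: adde_ge0.
rewrite [X in X <= _](psum_cst hp); last by rewrite lee_fin sqr_ge0.
apply: lee_sum => j _; apply: lee_wpmul2l; first by rewrite lee_fin; case: hp.
apply: (@le_trans _ _ (6%:E * (kl_loss a (basis_vec R j) + kl_loss b (basis_vec R j)))); last first.
  by apply: lee_wpmul2l => //; apply: leeD2l.
have Ka0' := Ka0 j; have Kb0' := Kb0 j.
rewrite !kl_basis in Ka0' Kb0' *.
have [ua0 ua1] := simplex_le1 j ha; have [ub0 ub1] := simplex_le1 j hb.
rewrite ge0_muleDr // -!e6.
apply: (@le_trans _ _ (2%:E * (4 * (1 - a ord0 j) ^+ 2)%:E +
                      2%:E * (4 * (1 - b ord0 j) ^+ 2)%:E)); last first.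
  by apply: leeD; apply: lee_wpmul2l => //; exact: klt_bound.
rewrite -!EFinM -EFinD lee_fin.
have h := l1_diff_bound j ha hb.
have l0 : (0 <= l1norm (b - a))%R by apply: sumr_ge0 => i _.
set l := l1norm (b - a) in h l0 *.
set u := a ord0 j in ua0 ua1 h *; set v := b ord0 j in ub0 ub1 h *.
have w0 : (0 <= 2 * (1 - v) + 2 * (1 - u))%R by lra.
have q1 := ler_wpM2l l0 h. have q2 := ler_wpM2r w0 h.
have q3 : (0 <= (u - v) ^+ 2)%R by apply: sqr_ge0.
rewrite !expr2 in q3 *; nra.
Qed.

Lemma l1_ee (R : realType) k (a : 'rV[R]_k) i j : in_simplex a ->
  (l1norm (basis_vec R i - basis_vec R j) ^+ 2 <=
   8 * (1 - a ord0 i) ^+ 2 + 8 * (1 - a ord0 j) ^+ 2)%R.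
Proof.
move=> ha.
have h : (l1norm (basis_vec R i - basis_vec R j) <=
          2 * (1 - a ord0 i) + 2 * (1 - a ord0 j))%R.
  rewrite -(l1_basis i ha) -(l1_basis j ha).
  have -> : (basis_vec R i - basis_vec R j =
             (basis_vec R i - a) + - (basis_vec R j - a))%R.
    by rewrite opprB addrA subrK.
  by rewrite -(l1normN (basis_vec R j - a)); apply: l1normD.
have l0 : (0 <= l1norm (basis_vec R i - basis_vec R j))%R by apply: sumr_ge0 => ? _.
have [? ?] := simplex_le1 i ha; have [? ?] := simplex_le1 j ha.
set l := l1norm _ in h l0 *.
set u := a ord0 i in h *; set v := a ord0 j in h *.
have w0 : (0 <= 2 * (1 - u) + 2 * (1 - v))%R by lra.
have q1 := ler_wpM2l l0 h. have q2 := ler_wpM2r w0 h.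
have q3 : (0 <= (u - v) ^+ 2)%R by apply: sqr_ge0.
rewrite !expr2 in q3 *; nra.
Qed.

Lemma cls_Y (R : realType) k (a p : 'rV[R]_k) (Sj : 'I_k -> \bar R) :
  in_simplex a -> in_simplex p ->
  (forall j, kl_loss a (basis_vec R j) <= Sj j) ->
  \sum_(i < k) \sum_(j < k)
     (p ord0 i * p ord0 j * l1norm (basis_vec R i - basis_vec R j)%R ^+ 2)%:E <=
  6%:E * \sum_(j < k) (p ord0 j)%:E * (kl_loss a (basis_vec R j) + Sj j).
Proof.
move=> ha hp hS.
have Ka0 j : 0 <= kl_loss a (basis_vec R j).
  by rewrite kl_basis; have [? ?] := simplex_le1 j ha; exact: klt_ge0.
have S0 j : 0 <= Sj j by apply: le_trans (hS j).
have [p0 p1] := hp.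
have real : (\sum_(i < k) \sum_(j < k)
     (p ord0 i * p ord0 j * l1norm (basis_vec R i - basis_vec R j)%R ^+ 2) <=
     \sum_(i < k) p ord0 i * (16 * (1 - a ord0 i) ^+ 2))%R.
  apply: (@le_trans _ _ (\sum_(i < k) \sum_(j < k) (p ord0 i * p ord0 j *
      (8 * (1 - a ord0 i) ^+ 2 + 8 * (1 - a ord0 j) ^+ 2)))%R).
    apply: ler_sum => i _; apply: ler_sum => j _; apply: ler_wpM2l.
      exact: mulr_ge0.
    exact: l1_ee.
  set A := (\sum_(j < k) p ord0 j * (8 * (1 - a ord0 j) ^+ 2))%R.
  have e1 i : (\sum_(j < k) (p ord0 i * p ord0 j *
      (8 * (1 - a ord0 i) ^+ 2 + 8 * (1 - a ord0 j) ^+ 2)) =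
      p ord0 i * (8 * (1 - a ord0 i) ^+ 2) + p ord0 i * A)%R.
    transitivity (\sum_(j < k) (p ord0 i * (8 * (1 - a ord0 i) ^+ 2) * p ord0 j +
        p ord0 i * (p ord0 j * (8 * (1 - a ord0 j) ^+ 2))))%R.
      by apply: eq_bigr => j _; ring.
    by rewrite big_split /= -!mulr_sumr p1 mulr1.
  rewrite (eq_bigr _ (fun i _ => e1 i)) big_split /= -mulr_suml p1 mul1r.
  rewrite /A -big_split /= le_eqVlt; apply/orP; left; apply/eqP.
  by apply: eq_bigr => i _; ring.
under eq_bigr do rewrite sumEFin.
rewrite sumEFin.
apply: (@le_trans _ _ (\sum_(i < k) (p ord0 i)%:E * (16 * (1 - a ord0 i) ^+ 2)%:E)).
  by rewrite (eq_bigr _ (fun i _ => esym (EFinM _ _))) sumEFin lee_fin.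
rewrite -(psum_6 hp); last by move=> j; exact: adde_ge0.
apply: lee_sum => i _; apply: lee_wpmul2l; first by rewrite lee_fin.
apply: (@le_trans _ _ (6%:E * (kl_loss a (basis_vec R i) + kl_loss a (basis_vec R i)))); last first.
  by apply: lee_wpmul2l => //; apply: leeD2l.
rewrite -e12 //.
have -> : ((16 * (1 - a ord0 i) ^+ 2)%:E = 4%:E * (4 * (1 - a ord0 i) ^+ 2)%:E :> \bar R).
  by rewrite -EFinM; congr (_%:E); ring.
apply: lee_wpmul2l => //; rewrite kl_basis.
by have [? ?] := simplex_le1 i ha; exact: klt_bound.
Qed.

Lemma cls_part (R : realType) (d k : nat) (N : 'rV[R]_d -> R) (eps : R)
     (dO : measure_display) (O : measurableType dO) (P : probability O R)
     (X : O -> 'rV[R]_d) (p : 'rV[R]_d -> 'rV[R]_k)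
     (f : 'rV[R]_d -> 'rV[R]_k) :
     (1 <= d)%N -> (1 < k)%N -> is_norm N -> (0 <= eps)%R ->
     (forall x, in_simplex (p x)) ->
     (forall x, in_simplex (f x)) ->
     measurable_fun setT (fun w =>
        (\sum_(j < k) (p (X w) ord0 j)%:E * kl_loss (f (X w)) (basis_vec R j))%E) ->
     measurable_fun setT (fun w =>
        (\sum_(j < k) (p (X w) ord0 j)%:E *
           adv_sup N eps (fun D => kl_loss (f (X w + D)%R) (basis_vec R j)))%E) ->
     measurable_fun setT (fun w =>
        adv_sup N eps (fun D => (l1norm ((f (X w + D)%R - f (X w))%R) ^+ 2)%:E)) ->
     measurable_fun setT (fun w =>
        (\sum_(i < k) \sum_(j < k)
           (p (X w) ord0 i * p (X w) ord0 j *
            l1norm (basis_vec R i - basis_vec R j)%R ^+ 2)%:E)%E) ->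
     (risk_cls P X p f + adv_risk_cls P X p N eps f >=
        (6^-1)%:E * maxe (smooth_cls P X N eps f) (ydisp_cls P X p))%E.
Proof.
move=> _ _ hN he hp hf mr ms mL mYd.
set S := fun w j => adv_sup N eps (fun D => kl_loss (f (X w + D)%R) (basis_vec R j)).
set r := fun w => (\sum_(j < k) (p (X w) ord0 j)%:E * kl_loss (f (X w)) (basis_vec R j)).
set s := fun w => (\sum_(j < k) (p (X w) ord0 j)%:E * S w j).
have SK w j : kl_loss (f (X w)) (basis_vec R j) <= S w j.
  rewrite /S; have := adv_sup0 (fun D => kl_loss (f (X w + D)%R) (basis_vec R j)) hN he.
  by rewrite addr0.
have K0 w j : 0 <= kl_loss (f (X w)) (basis_vec R j).
  by rewrite kl_basis; have [? ?] := simplex_le1 j (hf (X w)); exact: klt_ge0.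
have S0 w j : 0 <= S w j by apply: le_trans (SK w j).
have r0 w : 0 <= r w by apply: psum_ge0.
have s0 w : 0 <= s w by apply: psum_ge0.
have hrs w : r w + s w = \sum_(j < k) (p (X w) ord0 j)%:E *
                          (kl_loss (f (X w)) (basis_vec R j) + S w j).
  rewrite /r /s -big_split /=; apply: eq_bigr => j _; rewrite ge0_muleDr //.
have hL w : adv_sup N eps (fun D => (l1norm ((f (X w + D)%R - f (X w))%R) ^+ 2)%:E)
            <= 6%:E * (r w + s w).
  apply: adv_sup_le => D hD; rewrite hrs; apply: cls_L => // j.
  exact: adv_sup_ub.
have hY w : (\sum_(i < k) \sum_(j < k)
           (p (X w) ord0 i * p (X w) ord0 j *
            l1norm (basis_vec R i - basis_vec R j)%R ^+ 2)%:E)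
            <= 6%:E * (r w + s w).
  by rewrite hrs; apply: cls_Y.
have -> : risk_cls P X p f + adv_risk_cls P X p N eps f = \int[P]_w (r w + s w).
  by rewrite ge0_integralD.
have hC : \int[P]_w (6%:E * (r w + s w)) = 6%:E * \int[P]_w (r w + s w).
  by rewrite ge0_integralZl_EFin // => [w _|]; [exact: adde_ge0|exact: emeasurable_funD].
have L0 w : 0 <= adv_sup N eps (fun D => (l1norm ((f (X w + D)%R - f (X w))%R) ^+ 2)%:E).
  by apply: le_trans (adv_sup0 _ hN he); rewrite lee_fin sqr_ge0.
have Y0 w : 0 <= (\sum_(i < k) \sum_(j < k)
           (p (X w) ord0 i * p (X w) ord0 j *
            l1norm (basis_vec R i - basis_vec R j)%R ^+ 2)%:E).
  have [p0 _] := hp (X w).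
  apply: sume_ge0 => i _; apply: sume_ge0 => j _; rewrite lee_fin.
  by apply: mulr_ge0; [exact: mulr_ge0|exact: sqr_ge0].
have hmax : maxe (smooth_cls P X N eps f) (ydisp_cls P X p) <=
            6%:E * \int[P]_w (r w + s w).
  rewrite ge_max -hC; apply/andP; split; apply: nm_le_integral => //.
have e : \int[P]_w (r w + s w) =
   (6^-1)%:E * (6%:E * \int[P]_w (r w + s w)).
  by rewrite muleA -EFinM mulVf // mul1e.
by rewrite e; apply: lee_wpmul2l => //; rewrite lee_fin invr_ge0.
Qed.

Local Close Scope ereal_scope.

Theorem corollary1 :
  (* Setting (i): least-squares regression (k = 1) *)
  (forall (R : realType) (d : nat) (N : 'rV[R]_d -> R) (eps : R)
     (dO : measure_display) (O : measurableType dO) (P : probability O R)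
     (X : O -> 'rV[R]_d) (kappa : 'rV[R]_d -> probability R R)
     (f : 'rV[R]_d -> R),
     (1 <= d)%N -> is_norm N -> 0 <= eps ->
     measurable_fun setT (fun w => (\int[kappa (X w)]_y sq_loss (f (X w)) y)%E) ->
     (forall w, measurable_fun setT
        (fun y : R => adv_sup N eps (fun D => sq_loss (f (X w + D)%R) y))) ->
     measurable_fun setT (fun w => (\int[kappa (X w)]_y
        adv_sup N eps (fun D => sq_loss (f (X w + D)%R) y))%E) ->
     measurable_fun setT (fun w =>
        adv_sup N eps (fun D => (`|(f (X w + D)%R - f (X w))%R| ^+ 2)%:E)) ->
     measurable_fun setT (fun w =>
        (\int[kappa (X w)]_y \int[kappa (X w)]_y' (`|(y - y')%R| ^+ 2)%:E)%E) ->
     (risk_reg P X kappa f + adv_risk_reg P X kappa N eps f >=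
        (6^-1)%:E * maxe (smooth_reg P X N eps f) (ydisp_reg P X kappa))%E)
  /\
  (* Setting (ii): multiclass classification (k > 1) with KL loss *)
  (forall (R : realType) (d k : nat) (N : 'rV[R]_d -> R) (eps : R)
     (dO : measure_display) (O : measurableType dO) (P : probability O R)
     (X : O -> 'rV[R]_d) (p : 'rV[R]_d -> 'rV[R]_k)
     (f : 'rV[R]_d -> 'rV[R]_k),
     (1 <= d)%N -> (1 < k)%N -> is_norm N -> 0 <= eps ->
     (forall x, in_simplex (p x)) ->
     (forall x, in_simplex (f x)) ->
     measurable_fun setT (fun w =>
        (\sum_(j < k) (p (X w) ord0 j)%:E * kl_loss (f (X w)) (basis_vec R j))%E) ->
     measurable_fun setT (fun w =>
        (\sum_(j < k) (p (X w) ord0 j)%:E *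
           adv_sup N eps (fun D => kl_loss (f (X w + D)%R) (basis_vec R j)))%E) ->
     measurable_fun setT (fun w =>
        adv_sup N eps (fun D => (l1norm ((f (X w + D)%R - f (X w))%R) ^+ 2)%:E)) ->
     measurable_fun setT (fun w =>
        (\sum_(i < k) \sum_(j < k)
           (p (X w) ord0 i * p (X w) ord0 j *
            l1norm (basis_vec R i - basis_vec R j)%R ^+ 2)%:E)%E) ->
     (risk_cls P X p f + adv_risk_cls P X p N eps f >=
        (6^-1)%:E * maxe (smooth_cls P X N eps f) (ydisp_cls P X p))%E).
Proof. split; [exact: reg_part | exact: cls_part]. Qed.
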